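(* Let $G$ be a finite graph with a proper edge-coloring, and let $\delta(G)$ denote its minimum degree. If $|V(G)|\ge 2\delta(G)$, then $G$ has a rainbow matching of size at least $\delta(G)-2(\delta(G))^{2/3}$.
   Context: An edge-coloring is proper if no two edges sharing an endpoint receive the same color (so each color class is a matching). A matching is rainbow if all of its edges have distinct colors. $\delta(G)$ is the minimum vertex degree of $G$. *)

(* Defs.v *)
From HB Require Import structures.
From mathcomp Require Import all_boot all_order all_algebra.
From mathcomp Require Import reals exp.
Set Implicit Arguments. Unset Strict Implicit. Unset Printing Implicit Defensive.

(* A finite simple graph: vertex set T : finType, adjacency e : rel T that is
   symmetric and irreflexive (assumed as hypotheses in the theorem). *)

Definition deg (T : finType) (e : rel T) (x : T) : nat := #|[set y | e x y]|.

(* minimum degree delta(G); the seed #|T| exceeds every degree, so for a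
   nonempty vertex set this is exactly the minimum of the degrees
   (for the empty graph it is 0). *)
Definition mindeg (T : finType) (e : rel T) : nat :=
  \big[minn/#|T|]_(x : T) deg e x.

Definition proper_edge_coloring (T : finType) (e : rel T) (K : eqType)
    (c : T -> T -> K) : Prop :=
  (forall x y, e x y -> c x y = c y x) /\
  (forall x y z, e x y -> e x z -> y != z -> c x y != c x z).

(* A matching, given as a list of edges (x, y) whose endpoints are all
   pairwise distinct (so the edges are pairwise vertex-disjoint and distinct);
   its size is the length of the list. *)
Definition is_matching (T : finType) (e : rel T) (M : seq (T * T)) : Prop :=
  all (fun p => e p.1 p.2) M /\ uniq (flatten [seq [:: p.1; p.2] | p <- M]).

Definition rainbow_matching (T : finType) (e : rel T) (K : eqType)
    (c : T -> T -> K) (M : seq (T * T)) : Prop :=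
  is_matching e M /\ uniq [seq c p.1 p.2 | p <- M].

(* Main.v *)
Require Import Defs.
From HB Require Import structures.
From mathcomp Require Import all_boot all_order all_algebra.
From mathcomp Require Import reals exp.
From mathcomp Require Import zify.
Set Implicit Arguments. Unset Strict Implicit. Unset Printing Implicit Defensive.

Lemma disjP (X : finType) (A B : {set X}) : reflect (forall x, x \in A -> x \notin B) [disjoint A & B].
Proof.
rewrite disjoint_subset; apply: (iffP subsetP) => H x /H; by rewrite ?inE.
Qed.
Lemma card_U_le (X : finType) (A B : {set X}) : #|A :|: B| <= #|A| + #|B|.
Proof. by rewrite cardsU leq_subr. Qed.

Section Graph.
Variables (T : finType) (e : rel T) (K : eqType) (c : T -> T -> K).
Hypothesis esym : symmetric e.
Hypothesis eirr : irreflexive e.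
Hypothesis csym : forall x y, e x y -> c x y = c y x.
Hypothesis cprop : forall x y z, e x y -> e x z -> y != z -> c x y != c x z.

Implicit Types (S A : {set T * T}) (p q r : T * T).
Definition col (p : T * T) := c p.1 p.2.
Definition inp (x : T) (p : T * T) := (x == p.1) || (x == p.2).
Definition vx (S : {set T * T}) : {set T} := [set x | [exists p in S, inp x p]].
Definition hasc (S : {set T * T}) (g : K) := [exists p in S, col p == g].
Definition rb (S : {set T * T}) :=
  [forall p in S, e p.1 p.2] &&
  [forall p in S, forall q in S,
     (p != q) ==> [&& ~~ inp p.1 q, ~~ inp p.2 q & col p != col q]].

Lemma vxP S x : reflect (exists2 p, p \in S & inp x p) (x \in vx S).
Proof.
rewrite inE; apply: (iffP existsP) => [[p /andP[H1 H2]]|[p H1 H2]]; first by exists p.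
by exists p; rewrite H1.
Qed.

Lemma hascP S g : reflect (exists2 p, p \in S & col p = g) (hasc S g).
Proof.
apply: (iffP existsP) => [[p /andP[H1 /eqP H2]]|[p H1 H2]]; first by exists p.
by exists p; rewrite H1 H2 eqxx.
Qed.

Lemma inp1 p : inp p.1 p. Proof. by rewrite /inp eqxx. Qed.
Lemma inp2 p : inp p.2 p. Proof. by rewrite /inp eqxx orbT. Qed.

Lemma rb_edge S p : rb S -> p \in S -> e p.1 p.2.
Proof. by case/andP => /forall_inP H _ /H. Qed.

Lemma rb_disj S p q : rb S -> p \in S -> q \in S -> p != q ->
  [&& ~~ inp p.1 q, ~~ inp p.2 q & col p != col q].
Proof.
case/andP => _ /forall_inP H pS qS; move: (H p pS) => /forall_inP /(_ q qS).
by move/implyP.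
Qed.

Lemma rb_col S p q : rb S -> p \in S -> q \in S -> col p = col q -> p = q.
Proof.
move=> H pS qS E; apply/eqP; apply/negPn/negP => /(rb_disj H pS qS).
by rewrite E eqxx !andbF.
Qed.

Lemma rb_vert S p q x : rb S -> p \in S -> q \in S -> inp x p -> inp x q -> p = q.
Proof.
move=> H pS qS hp hq; apply/eqP; apply/negPn/negP => /(rb_disj H pS qS).
by case/orP: hp => /eqP <-; rewrite hq // andbF.
Qed.

Lemma rb_sub A S : A \subset S -> rb S -> rb A.
Proof.
move=> /subsetP sub H; apply/andP; split.
  by apply/forall_inP => p /sub; apply: rb_edge.
apply/forall_inP => p pA; apply/forall_inP => q qA; apply/implyP.
exact: rb_disj H (sub _ pA) (sub _ qA).
Qed.

Lemma vx_sub A S : A \subset S -> vx A \subset vx S.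
Proof.
move/subsetP=> sub; apply/subsetP => x /vxP[p /sub pS hp]; apply/vxP; by exists p.
Qed.

Lemma vxU1 p S x : (x \in vx (p |: S)) = inp x p || (x \in vx S).
Proof.
apply/vxP/orP => [[q]|].
  by rewrite in_setU1 => /orP[/eqP -> ->|qS hq]; [left|right; apply/vxP; exists q].
case=> [hp|/vxP[q qS hq]]; first by exists p; rewrite ?setU11.
by exists q; rewrite // in_setU1 qS orbT.
Qed.

Lemma hascU1 p S g : hasc (p |: S) g = (col p == g) || hasc S g.
Proof.
apply/hascP/orP => [[q]|].
  by rewrite in_setU1 => /orP[/eqP -> ->|qS hq]; [left|right; apply/hascP; exists q].
case=> [/eqP hp|/hascP[q qS hq]]; first by exists p; rewrite ?setU11.
by exists q; rewrite // in_setU1 qS orbT.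
Qed.

Lemma hasc_sub A S g : A \subset S -> hasc A g -> hasc S g.
Proof. move/subsetP=> sub /hascP[p /sub pS h]; apply/hascP; by exists p. Qed.

Lemma rb_add S p : rb S -> e p.1 p.2 -> p.1 \notin vx S -> p.2 \notin vx S ->
  ~~ hasc S (col p) -> rb (p |: S).
Proof.
move=> H ep h1 h2 hc.
have pS : p \notin S by apply: contra h1 => pS; apply/vxP; exists p => //; apply: inp1.
apply/andP; split.
  by apply/forall_inP => q; rewrite in_setU1 => /orP[/eqP ->//|]; apply: rb_edge.
apply/forall_inP => q; rewrite in_setU1 => hq; apply/forall_inP => r; rewrite in_setU1 => hr.
apply/implyP => nqr.
case/orP: hq => [/eqP Eq|qS]; case/orP: hr => [/eqP Er|rS].
- by rewrite Eq Er eqxx in nqr.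
- subst q; apply/and3P; split.
  + by apply: contra h1 => hh; apply/vxP; exists r.
  + by apply: contra h2 => hh; apply/vxP; exists r.
  + by apply: contra hc => /eqP hh; apply/hascP; exists r.
- subst r; apply/and3P; split.
  + apply/negP => /orP[] /eqP E.
      by move: h1; rewrite -E; case/vxP; exists q => //; apply: inp1.
    by move: h2; rewrite -E; case/vxP; exists q => //; apply: inp1.
  + apply/negP => /orP[] /eqP E.
      by move: h1; rewrite -E; case/vxP; exists q => //; apply: inp2.
    by move: h2; rewrite -E; case/vxP; exists q => //; apply: inp2.
  + by apply: contra hc => /eqP hh; apply/hascP; exists q.
- exact: (rb_disj H qS rS nqr).
Qed.

End Graph.
Section G2.
Variables (T : finType) (e : rel T) (K : eqType) (c : T -> T -> K).
Hypothesis esym : symmetric e.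
Hypothesis eirr : irreflexive e.
Implicit Types (S A : {set T * T}) (p q r : T * T).

Lemma vx_split S : vx S = [set p.1 | p in S] :|: [set p.2 | p in S].
Proof.
apply/setP => x; apply/vxP/setUP => [[p pS /orP[] /eqP ->]|[]/imsetP[p pS ->]].
- by left; apply/imsetP; exists p.
- by right; apply/imsetP; exists p.
- by exists p => //; apply: inp1.
- by exists p => //; apply: inp2.
Qed.

Lemma vx_disj S : rb e c S -> [disjoint [set p.1 | p in S] & [set p.2 | p in S]].
Proof.
move=> H; rewrite -setI_eq0; apply/eqP.
apply/setP => x; rewrite inE in_set0; apply/negP => /andP[/imsetP[p pS ->] /imsetP[q qS E1]].
have pq : p = q by apply: (rb_vert H pS qS (inp1 p)); rewrite /inp E1 eqxx orbT.
by subst q; move: (rb_edge H pS); rewrite E1 eirr.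
Qed.

Lemma inj1 S : rb e c S -> {in S &, injective (fun p : T * T => p.1)}.
Proof. move=> H p q pS qS E1; apply: (rb_vert H pS qS (inp1 p)); by rewrite /inp E1 eqxx. Qed.
Lemma inj2 S : rb e c S -> {in S &, injective (fun p : T * T => p.2)}.
Proof. move=> H p q pS qS E1; apply: (rb_vert H pS qS (inp2 p)); by rewrite /inp E1 eqxx orbT. Qed.

Lemma card_vx S : rb e c S -> #|vx S| = 2 * #|S|.
Proof.
move=> H; rewrite vx_split cardsU.
have -> : [set p.1 | p in S] :&: [set p.2 | p in S] = set0.
  by apply/eqP; rewrite setI_eq0; apply: vx_disj.
by rewrite cards0 subn0 !card_in_imset ?addnn ?mul2n //; [apply: inj2|apply: inj1].
Qed.

Lemma sum_vx S (g : T -> nat) : rb e c S ->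
  \sum_(z in vx S) g z = \sum_(p in S) (g p.1 + g p.2).
Proof.
move=> H; rewrite big_split /=.
rewrite (eq_bigl [predU [set p.1 | p in S] & [set p.2 | p in S]]); last first.
  by move=> z; rewrite vx_split !inE.
rewrite bigU; last exact: vx_disj.
by rewrite !big_imset //; [apply: inj2|apply: inj1].
Qed.
End G2.
Section Main.
Variables (T : finType) (e : rel T) (K : eqType) (c : T -> T -> K).
Hypothesis esym : symmetric e.
Hypothesis eirr : irreflexive e.
Hypothesis csym : forall x y, e x y -> c x y = c y x.
Hypothesis cprop : forall x y z, e x y -> e x z -> y != z -> c x y != c x z.
Implicit Types (S A P : {set T * T}) (p q r : T * T).
Variable M : {set T * T}.
Hypothesis HM : rb e c M.
Variable L : nat.
Hypothesis Hmax : forall S, rb e c S -> #|S| <= #|M|.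
Hypothesis HL : 2 <= L.
Local Notation col := (col c).
Local Notation hasc := (hasc c).
Definition th j := 4 * L - 2 * j - 1.
Definition U := ~: vx M.
Definition avail P g := ~~ hasc M g || hasc P g.
Definition opts P x := [set u in U | e u x && avail P (c u x)].
Definition heavy j P p := (th j <= #|opts P p.1|) || (th j <= #|opts P p.2|).
Fixpoint prom j := if j is j'.+1 then
   prom j' :|: [set p in M :\: prom j' | heavy j' (prom j') p] else set0.

Lemma prom_sub j : prom j \subset M.
Proof.
elim: j => [|j IH] /=; first exact: sub0set.
rewrite subUset IH /=; apply/subsetP => p; rewrite !inE => /andP[/andP[]]//.
Qed.

Lemma prom_mono i j : i <= j -> prom i \subset prom j.
Proof.
move/subnK <-; elim: (j - i) => [|k IH] //=; apply: subset_trans IH _; exact: subsetUl.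
Qed.

Lemma prom_lev j p : p \in prom j -> exists2 i, i < j & (p \notin prom i) && (p \in prom i.+1).
Proof.
elim: j => [|j IH] /=; first by rewrite in_set0.
case: (boolP (p \in prom j)) => [/IH [i ij H] _|pn]; first by exists i => //; lia.
move=> pj; exists j => //; by rewrite pn.
Qed.

Lemma prom_new j p : p \notin prom j -> p \in prom j.+1 -> p \in M /\ heavy j (prom j) p.
Proof. by move=> pn /=; rewrite in_setU (negbTE pn) /= !inE => /andP[/andP[]]. Qed.

Definition lev p := count (fun i => p \notin prom i.+1) (iota 0 L).

Lemma count_lt_iota i n : i <= n -> count (fun j => j < i) (iota 0 n) = i.
Proof.
move/subnK <-; rewrite addnC iotaD count_cat add0n.
rewrite (eq_in_count (a2 := predT)); last first.
  by move=> j; rewrite mem_iota add0n => /andP[_ ->].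
rewrite count_predT size_iota (eq_in_count (a2 := pred0)); last first.
  by move=> j; rewrite mem_iota => /andP[H _] /=; rewrite ltnNge H.
by rewrite count_pred0 addn0.
Qed.

Lemma levE i p : i < L -> p \notin prom i -> p \in prom i.+1 -> lev p = i.
Proof.
move=> iL pn pi; rewrite /lev -[RHS](@count_lt_iota i L) ?(ltnW iL) //.
apply: eq_in_count => j _ /=.
case: (ltnP j i) => ji.
  by apply/negP => /(subsetP (prom_mono ji)); rewrite (negbTE pn).
by rewrite (subsetP (prom_mono (ji : i < j.+1)) _ pi).
Qed.

Lemma lev_prom p : p \in prom L -> [/\ lev p < L, p \notin prom (lev p) & p \in prom (lev p).+1].
Proof.
case/prom_lev => i iL /andP[pn pi]; rewrite (levE iL pn pi); by split.
Qed.

Lemma lev_lt i p : i <= L -> p \in prom i -> lev p < i.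
Proof.
move=> iL /prom_lev [i' ii' /andP[pn pi]]; rewrite (levE _ pn pi) //; lia.
Qed.

Definition head p := if th (lev p) <= #|opts (prom (lev p)) p.1| then p.1 else p.2.
Definition tail p := if th (lev p) <= #|opts (prom (lev p)) p.1| then p.2 else p.1.

Lemma head_heavy p : p \in prom L -> th (lev p) <= #|opts (prom (lev p)) (head p)|.
Proof.
case/lev_prom => _ pn pi; have [_ /orP H] := prom_new pn pi.
rewrite /head; case: ifP => // /negbT nh; case: H => // h; by rewrite h in nh.
Qed.

Lemma inp_head p : inp (head p) p.
Proof. rewrite /head; case: ifP => _; [exact: inp1 | exact: inp2]. Qed.
Lemma inp_tail p : inp (tail p) p.
Proof. rewrite /tail; case: ifP => _; [exact: inp2 | exact: inp1]. Qed.

Lemma head_tail p : p \in M -> head p != tail p.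
Proof.
move=> pM; have := rb_edge HM pM; rewrite /head /tail.
case: ifP => _ H; apply/eqP => E; by move: H; rewrite E eirr.
Qed.

Lemma inp_ht p x : inp x p -> x = head p \/ x = tail p.
Proof. by rewrite /head /tail /inp; case: ifP => _ /orP[]/eqP ->; auto. Qed.


Lemma promLM p : p \in prom L -> p \in M.
Proof. exact: (subsetP (prom_sub L)). Qed.

Lemma inU u : (u \in U) = (u \notin vx M).
Proof. by rewrite inE. Qed.

Lemma optsP P x u : reflect [/\ u \in U, e u x & avail P (c u x)] (u \in opts P x).
Proof.
rewrite /opts inE; apply: (iffP idP) => [/andP[h1 /andP[h2 h3]]|[h1 h2 h3]]; first by split.
by rewrite h1 h2 h3.
Qed.

Lemma card_colx (O : {set T}) x (Y : seq K) :
  (forall u, u \in O -> e u x) -> #|[set u in O | c u x \in Y]| <= size Y.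
Proof.
move=> HO; set B := [set u in O | _].
rewrite cardE -(size_map (fun u => c u x)); apply: uniq_leq_size.
  rewrite map_inj_in_uniq ?enum_uniq // => u v; rewrite !mem_enum !inE.
  move=> /andP[uO _] /andP[vO _] E; apply/eqP; apply/negPn/negP => uv.
  have hu : e x u by rewrite esym; apply: HO.
  have hv : e x v by rewrite esym; apply: HO.
  by have := cprop hu hv uv; rewrite -(csym (HO u uO)) -(csym (HO v vO)) E eqxx.
by move=> g /mapP[u]; rewrite mem_enum inE => /andP[_ h] ->.
Qed.

Lemma hasc_map S g : hasc S g = (g \in [seq col p | p <- enum S]).
Proof.
apply/hascP/mapP => [[p pS <-]|[p]]; first by exists p; rewrite ?mem_enum.
by rewrite mem_enum => pS ->; exists p.
Qed.

Record inv (X0 : {set T}) (Y0 : seq K) (jt B : nat) (Mc P : {set T * T}) : Prop := Inv {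
  i_rb : rb e c Mc;
  i_card : #|Mc| + #|P| = #|M|;
  i_Pj : P \subset prom jt;
  i_PMc : [disjoint P & Mc];
  i_K : forall p, p \in Mc -> p \notin M ->
          p.1 \in U /\ exists2 q, q \in M :\: (Mc :|: P) & inp p.2 q;
  i_X : [disjoint X0 & vx Mc];
  i_Y : forall g, g \in Y0 -> ~~ hasc Mc g;
  i_B : #|Mc :\: M| + \sum_(p in P) (lev p).+1 <= B;
  i_Mc : M :\: Mc \subset prom jt;
  i_H : forall p, p \in P -> head p \notin X0 }.

Lemma step (X0 : {set T}) (Y0 : seq K) (jt B : nat) (Mc P : {set T * T}) (x0 : T * T) :
  jt <= L ->
  (forall i, i < L -> #|X0| + size Y0 + 2 * (B - i.+1) < th i) ->
  inv X0 Y0 jt B Mc P -> x0 \in P ->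
  exists Mc', exists P', inv X0 Y0 jt B Mc' P' /\
     \sum_(p in P') (lev p).+1 < \sum_(p in P) (lev p).+1.
Proof.
move=> jtL Hth [Hrb Hcard HPj HPMc HK HX HY HB HMc HH] x0P.
have x0j : x0 \in prom jt := subsetP HPj _ x0P.
have x0L : x0 \in prom L := subsetP (prom_mono jtL) _ x0j.
have x0M := promLM x0L.
have x0Mc : x0 \notin Mc by rewrite (disjointFr HPMc x0P).
have [iL _ _] := lev_prom x0L.
have ilt : lev x0 < jt := lev_lt jtL x0j.
have Hheavy := head_heavy x0L.
move: iL ilt Hheavy; set i := lev x0; set hx := head x0 => iL ilt Hheavy.
set O := opts (prom i) hx.
have Hsum : \sum_(p in P) (lev p).+1 = i.+1 + \sum_(p in P :\ x0) (lev p).+1.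
  by rewrite (big_setD1 x0).
have Hnew : #|Mc :\: M| <= B - i.+1.
  move: HB; rewrite Hsum; move: #|Mc :\: M| (\sum_(p in P :\ x0) (lev p).+1); clear; lia.
have eO : forall u, u \in O -> e u hx by move=> u /optsP[].
pose b1 := [set u in O | u \in X0].
pose b2 := [set u in O | u \in vx Mc].
pose b3 := [set u in O | c u hx \in Y0].
pose b4 := [set u in O | c u hx \in [seq col p | p <- enum (Mc :\: M)]].
have c1 : #|b1| <= #|X0|.
  by apply: subset_leq_card; apply/subsetP => u; rewrite inE => /andP[].
have c2 : #|b2| <= #|Mc :\: M|.
  apply: leq_trans (leq_imset_card (fun p : T * T => p.1) _).
  apply: subset_leq_card; apply/subsetP => u; rewrite inE.
  move=> /andP[/optsP[uU _ _] /vxP[p pMc hp]].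
  have pM : p \notin M.
    by apply: contraL uU => pM; rewrite inU negbK; apply/vxP; exists p.
  apply/imsetP; exists p; first by rewrite inE pMc pM.
  have [_ [q /setDP[qM _] hq]] := HK p pMc pM.
  case/orP: hp => /eqP E; first by rewrite E.
  by move: uU; rewrite inU => /negP[]; apply/vxP; exists q; rewrite // E.
have c3 : #|b3| <= size Y0 := card_colx Y0 eO.
have c4 : #|b4| <= #|Mc :\: M|.
  by apply: leq_trans (card_colx _ eO) _; rewrite size_map -cardE.
have [u uO] : exists2 u, u \in O & u \notin b1 :|: b2 :|: b3 :|: b4.
  apply/subsetPn/negP => /subset_leq_card Hs.
  have h1 := card_U_le (b1 :|: b2 :|: b3) b4.
  have h2 := card_U_le (b1 :|: b2) b3.
  have h3 := card_U_le b1 b2.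
  have h4 := Hth i iL.
  rewrite -/O in Hheavy.
  move: Hs h1 h2 h3 h4 Hheavy c1 c2 c3 c4 Hnew.
  move: #|O| #|b1 :|: b2 :|: b3 :|: b4| #|b1 :|: b2 :|: b3| #|b1 :|: b2| #|b1| #|b2| #|b3| #|b4|.
  move: #|X0| (size Y0) (th i) #|Mc :\: M| (B - i.+1).
  clear; lia.
move=> hnb.
have uX : u \notin X0 by apply: contra hnb => h; rewrite !in_setU [u \in b1]inE uO h.
have uV : u \notin vx Mc by apply: contra hnb => h; rewrite !in_setU [u \in b2]inE uO h !orbT.
have uY : c u hx \notin Y0 by apply: contra hnb => h; rewrite !in_setU [u \in b3]inE uO h !orbT.
have uN : c u hx \notin [seq col p | p <- enum (Mc :\: M)].
  by apply: contra hnb => h; rewrite !in_setU [u \in b4]inE uO h !orbT.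
have [uU eux av] := optsP _ _ _ uO.
have hxM : hx \in vx M by apply/vxP; exists x0 => //; apply: inp_head.
have hxV : hx \notin vx Mc.
  apply/negP => /vxP[p pMc hp].
  case: (boolP (p \in M)) => pM.
    have E := rb_vert HM pM x0M hp (inp_head x0).
    by move: x0Mc; rewrite -E pMc.
  have [h1 [q /setDP[qM qn] hq]] := HK p pMc pM.
  case/orP: hp => /eqP E.
    by move: h1; rewrite inU -E hxM.
  have hq' : inp hx q by rewrite E.
  have E2 := rb_vert HM qM x0M hq' (inp_head x0).
  by move: qn; rewrite E2 in_setU x0P orbT.
have hxX : hx \notin X0 := HH x0 x0P.
have newM : (u, hx) \notin M.
  apply/negP => h; move: uU; rewrite inU => /negP[]; apply/vxP; exists (u, hx) => //.
  exact: (inp1 (u, hx)).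
have newMc : (u, hx) \notin Mc.
  apply/negP => h; move: uV => /negP[]; apply/vxP; exists (u, hx) => //; exact: (inp1 (u, hx)).
have uVM : u \notin vx M by rewrite -inU.
case: (boolP (hasc Mc (c u hx))) => [/hascP[q qMc qa] | na].
- have qM : q \in M.
    apply/negPn/negP => qM; move: uN; rewrite -qa; apply/negP/negPn.
    by apply: map_f; rewrite mem_enum inE qM qMc.
  have qi : q \in prom i.
    move: av; rewrite /avail; case/orP => [/negP []|/hascP[q' q'i q'a]].
      by apply/hascP; exists q.
    have q'M := subsetP (prom_sub i) _ q'i.
    by rewrite (rb_col HM qM q'M (etrans qa (Logic.eq_sym q'a))).
  have qlev : lev q < i := lev_lt (ltnW iL) qi.
  have qP : q \notin P by rewrite (disjointFl HPMc qMc).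
  have qx0 : q != x0 by apply: contraNneq qP => ->.
  have qP' : q \notin P :\ x0 by rewrite inE negb_and qP orbT.
  have newMcq : (u, hx) \notin Mc :\ q by rewrite inE negb_and newMc orbT.
  exists ((u, hx) |: (Mc :\ q)), (q |: (P :\ x0)); split; last first.
    rewrite big_setU1 //= Hsum; move: qlev; move: (lev q) (\sum_(p in P :\ x0) (lev p).+1); clear; lia.
  constructor.
  + apply: rb_add => //=; first exact: rb_sub (subD1set _ _) Hrb.
    * by apply: contra uV; apply/subsetP/vx_sub/subD1set.
    * by apply: contra hxV; apply/subsetP/vx_sub/subD1set.
    * apply/hascP => [[p]]; rewrite inE => /andP[pq pMc] pa.
      by move: pq; rewrite inE (rb_col Hrb pMc qMc (etrans pa (Logic.eq_sym qa))) eqxx.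
  + rewrite cardsU1 newMcq cardsU1 qP' /=.
    move: Hcard; rewrite (cardsD1 q Mc) (cardsD1 x0 P) qMc x0P /=; move: #|Mc :\ q| #|P :\ x0|; clear; lia.
  + apply/subsetP => p; rewrite in_setU1 => /orP[/eqP ->|].
      exact: subsetP (prom_mono (ltnW ilt)) _ qi.
    by rewrite inE => /andP[_ /(subsetP HPj)].
  + apply/disjP => p; rewrite in_setU1 => hp; rewrite in_setU1 negb_or; apply/andP; split.
      case/orP: hp => [/eqP ->|]; first by apply: contra newM => /eqP <-.
      by rewrite inE => /andP[_ pP]; apply: contra newM => /eqP <-; apply: (subsetP (prom_sub jt)); apply: (subsetP HPj).
    rewrite in_setD1 negb_and negbK; case/orP: hp => [/eqP ->|]; first by rewrite eqxx.
    by rewrite in_setD1 => /andP[_ pP]; rewrite (disjointFr HPMc pP) orbT.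
  + move=> p; rewrite in_setU1 => /orP[/eqP -> _|].
      split => //; exists x0; last exact: inp_head.
      have h1 : x0 != (u, hx) by apply: contraNneq newM => <-.
      have h2 : x0 != q by apply: contraNneq x0Mc => ->.
      by rewrite in_setD x0M andbT in_setU !in_setU1 !in_setD1 eqxx (negbTE x0Mc) (negbTE h1) (negbTE h2) ?andbF.
    rewrite in_setD1 => /andP[pq pMc] pM; have [h1 [q' /setDP[q'M q'n] hq']] := HK p pMc pM.
    split => //; exists q' => //.
    move: q'n; rewrite in_setU negb_or => /andP[q'Mc q'P].
    have h3 : q' != (u, hx) by apply: contraNneq newM => <-.
    have h4 : q' != q by apply: contraNneq q'Mc => ->.
    by rewrite in_setD q'M andbT in_setU !in_setU1 !in_setD1 (negbTE q'Mc) (negbTE q'P) (negbTE h3) (negbTE h4) ?andbF.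
  + apply/disjP => x xX; rewrite vxU1 negb_or; apply/andP; split.
      by rewrite /inp /= negb_or; apply/andP; split; apply/eqP => E; [move: uX | move: hxX]; rewrite -E xX.
    by apply: contraFN (disjointFr HX xX); apply/subsetP/vx_sub/subD1set.
  + move=> g gY; rewrite hascU1 negb_or; apply/andP; split.
      by apply: contraNneq uY => E; rewrite -[c u hx]/(col (u, hx)) E.
    apply: contra (HY g gY); apply: hasc_sub; exact: subD1set.
  + have hA : #|((u, hx) |: (Mc :\ q)) :\: M| <= #|[set (u, hx)] :|: (Mc :\: M)|.
      apply: subset_leq_card; apply/subsetP => p.
      rewrite in_setD in_setU1 in_setD1 in_setU in_set1 in_setD.
      by case: eqP => [->|_] /=; [rewrite (negbTE newM)| case/and3P=> -> _ ->].
    have hB := card_U_le [set (u, hx)] (Mc :\: M); rewrite cards1 in hB.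
    rewrite big_setU1 //=; move: HB hA hB; rewrite Hsum; move: qlev.
    move: #|((u, hx) |: (Mc :\ q)) :\: M| #|[set (u, hx)] :|: (Mc :\: M)| #|Mc :\: M| (lev q) (\sum_(p in P :\ x0) (lev p).+1); clear; lia.
  + apply/subsetP => p; rewrite !inE negb_or negb_and negbK.
    case/andP => /andP[_ /orP[/eqP ->|pMc]] pM; first exact: subsetP (prom_mono (ltnW ilt)) _ qi.
    by apply: (subsetP HMc); rewrite inE pM pMc.
  + move=> p; rewrite in_setU1 => /orP[/eqP ->|]; last by rewrite inE => /andP[_ /HH].
    have hq : head q \in vx Mc by apply/vxP; exists q => //; exact: inp_head.
    by rewrite (disjointFl HX hq).
- have newM' : (u, hx) \notin Mc by [].
  exists ((u, hx) |: Mc), (P :\ x0); split; last by rewrite Hsum; move: (\sum_(p in P :\ x0) (lev p).+1); clear; lia.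
  constructor.
  + exact: rb_add.
  + rewrite cardsU1 newMc; move: Hcard; rewrite (cardsD1 x0 P) x0P /=; move: #|Mc| #|P :\ x0|; clear; lia.
  + by apply: subset_trans (subD1set _ _) HPj.
  + apply/disjP => p; rewrite inE => /andP[_ pP]; rewrite in_setU1 negb_or (disjointFr HPMc pP) andbT.
    apply: contra newM => /eqP <-; apply: (subsetP (prom_sub jt)); exact: (subsetP HPj).
  + move=> p; rewrite in_setU1 => /orP[/eqP -> _|].
      split => //; exists x0; last exact: inp_head.
      have h1 : x0 != (u, hx) by apply: contraNneq newM => <-.
      by rewrite in_setD x0M andbT in_setU !in_setU1 !in_setD1 eqxx (negbTE x0Mc) (negbTE h1) ?andbF.
    move=> pMc pM; have [h1 [q' /setDP[q'M q'n] hq']] := HK p pMc pM.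
    split => //; exists q' => //.
    move: q'n; rewrite in_setU negb_or => /andP[q'Mc q'P].
    have h3 : q' != (u, hx) by apply: contraNneq newM => <-.
    by rewrite in_setD q'M andbT in_setU !in_setU1 !in_setD1 (negbTE q'Mc) (negbTE q'P) (negbTE h3) ?andbF.
  + apply/disjP => x xX; rewrite vxU1 negb_or (disjointFr HX xX) andbT.
    by rewrite /inp /= negb_or; apply/andP; split; apply/eqP => E; [move: uX | move: hxX]; rewrite -E xX.
  + move=> g gY; rewrite hascU1 negb_or (HY g gY) andbT.
    by apply: contraNneq uY => E; rewrite -[c u hx]/(col (u, hx)) E.
  + have hA : #|((u, hx) |: Mc) :\: M| <= #|[set (u, hx)] :|: (Mc :\: M)|.
      apply: subset_leq_card; apply/subsetP => p.
      rewrite in_setD in_setU1 in_setU in_set1 in_setD.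
      by case: eqP => [->|_] /=; [rewrite (negbTE newM)| case/andP=> -> ->].
    have hB := card_U_le [set (u, hx)] (Mc :\: M); rewrite cards1 in hB.
    move: HB hA hB; rewrite Hsum.
    move: #|((u, hx) |: Mc) :\: M| #|[set (u, hx)] :|: (Mc :\: M)| #|Mc :\: M| (\sum_(p in P :\ x0) (lev p).+1); clear; lia.
  + apply/subsetP => p; rewrite !inE negb_or => /andP[/andP[_ pMc] pM].
    by apply: (subsetP HMc); rewrite inE pM pMc.
  + by move=> p; rewrite inE => /andP[_ /HH].
Qed.

Lemma exchange (X0 : {set T}) (Y0 : seq K) (jt B : nat) :
  jt <= L ->
  (forall i, i < L -> #|X0| + size Y0 + 2 * (B - i.+1) < th i) ->
  forall Mc P, inv X0 Y0 jt B Mc P ->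
  exists Mf, [/\ rb e c Mf, #|Mf| = #|M|, [disjoint X0 & vx Mf],
     (forall g, g \in Y0 -> ~~ hasc Mf g) & M :\: Mf \subset prom jt].
Proof.
move=> jtL Hth Mc P.
move: {2}(\sum_(p in P) (lev p).+1) (leqnn (\sum_(p in P) (lev p).+1)) => n.
elim: n Mc P => [|n IH] Mc P Hn Hinv.
  case: (set_0Vmem P) => [P0|[x0 x0P]].
    exists Mc; case: Hinv => H1 H2 _ _ _ H6 H7 _ H9 _; split => //.
    by move: H2; rewrite P0 cards0 addn0.
  by move: Hn; rewrite (big_setD1 x0).
case: (set_0Vmem P) => [P0|[x0 x0P]].
  exists Mc; case: Hinv => H1 H2 _ _ _ H6 H7 _ H9 _; split => //.
  by move: H2; rewrite P0 cards0 addn0.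
have [Mc' [P' [Hinv' Hlt]]] := step jtL Hth Hinv x0P.
apply: (IH Mc' P') => //; move: Hlt Hn; clear; lia.
Qed.

Lemma notin_vx S p : p.1 \notin vx S -> p \notin S.
Proof. by apply: contra => pS; apply/vxP; exists p => //; apply: inp1. Qed.

Lemma inv_init (X0 : {set T}) (Y0 : seq K) j P0 :
  j <= L -> P0 \subset prom j -> #|P0| <= 2 ->
  [disjoint X0 & vx (M :\: P0)] -> (forall g, g \in Y0 -> ~~ hasc (M :\: P0) g) ->
  (forall p, p \in P0 -> head p \notin X0) -> inv X0 Y0 j (2 * j) (M :\: P0) P0.
Proof.
move=> jL P0j P02 HX HY HH.
have P0M : P0 \subset M := subset_trans P0j (prom_sub j).
constructor => //.
- exact: rb_sub (subsetDl M P0) HM.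
- rewrite cardsDS // subnK //; exact: subset_leq_card.
- by apply/disjP => p pP; rewrite in_setD pP.
- by move=> p; rewrite in_setD => /andP[_ ->].
- have -> : (M :\: P0) :\: M = set0.
    by apply/setP => p; rewrite !in_setD in_set0; case: (p \in M); rewrite ?andbF.
  rewrite cards0 add0n; apply: leq_trans (_ : \sum_(p in P0) j <= _).
    apply: leq_sum => p pP; exact: lev_lt jL (subsetP P0j _ pP).
  rewrite sum_nat_const; move: P02; clear; nia.
- apply/subsetP => p; rewrite !in_setD negb_and negbK => /andP[/orP[pP|/negP//] _].
  exact: (subsetP P0j).
Qed.

Definition Rq j g := [set r in prom j | col r == g].

Lemma Rq_card j g : #|Rq j g| <= 1.
Proof.
apply/card_le1_eqP => r r'; rewrite !inE => /andP[r1 /eqP r2] /andP[r1' /eqP r2'].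
apply: (rb_col HM (subsetP (prom_sub j) _ r1') (subsetP (prom_sub j) _ r1)).
by rewrite r2 r2'.
Qed.

Lemma Rq_sub j g : Rq j g \subset prom j.
Proof. by apply/subsetP => r; rewrite inE => /andP[]. Qed.

Lemma avail_hasc j g P0 : avail (prom j) g -> Rq j g \subset P0 -> ~~ hasc (M :\: P0) g.
Proof.
move=> av sub; apply/hascP => [[p]]; rewrite in_setD => /andP[pP pM] pg.
move: av; rewrite /avail => /orP[/negP[]|/hascP[r ri rg]].
  by apply/hascP; exists p.
have rM := subsetP (prom_sub j) _ ri.
have E : p = r by apply: (rb_col HM pM rM); rewrite pg rg.
by move: pP; rewrite E (subsetP sub) // inE ri rg eqxx.
Qed.

Lemma U_head u p : u \in U -> p \in M -> head p != u.
Proof.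
move=> uU pM; apply/eqP => E; move: uU; rewrite inU => /negP[]; apply/vxP.
by exists p => //; rewrite -E; apply: inp_head.
Qed.

Lemma vx_notU x : x \in vx M -> x \notin U.
Proof. by rewrite inU => ->. Qed.

Lemma thOK (X0 : {set T}) (Y0 : seq K) j : #|X0| <= 2 -> size Y0 <= 2 -> j < L ->
  forall i, i < L -> #|X0| + size Y0 + 2 * (2 * j - i.+1) < th i.
Proof.
move=> h1 h2 jL i iL; rewrite /th; move: h1 h2 jL iL HL.
move: #|X0| (size Y0); clear; lia.
Qed.

Lemma card2 (X : finType) (a b : X) : #|[set a; b]| <= 2.
Proof. by rewrite cards2; case: (a != b). Qed.

Lemma noA j u w : j < L -> u \in U -> e u w -> avail (prom j) (c u w) ->
  (w \in U \/ exists2 q, q \in prom j & w = tail q) -> False.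
Proof.
move=> jL uU euw av hw.
pose Q0 := [set q in prom j | w == tail q].
pose P0 := Q0 :|: Rq j (c u w).
have Q0c : #|Q0| <= 1.
  apply/card_le1_eqP => q q'; rewrite !inE => /andP[q1 /eqP q2] /andP[q1' /eqP q2'].
  apply: (rb_vert HM (subsetP (prom_sub j) _ q1') (subsetP (prom_sub j) _ q1) (x := w)).
    by rewrite q2'; apply: inp_tail.
  by rewrite q2; apply: inp_tail.
have P0j : P0 \subset prom j.
  by rewrite subUset Rq_sub andbT; apply/subsetP => q; rewrite inE => /andP[].
have P0c : #|P0| <= 2.
  by apply: leq_trans (card_U_le _ _) _; have := Rq_card j (c u w); move: Q0c; clear; lia.
have Hw : forall p, p \in M -> inp w p -> p \in P0.
  move=> p pM hp; case: hw => [wU|[q qj wq]].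
    by move: wU; rewrite inU => /negP[]; apply/vxP; exists p.
  have qM := subsetP (prom_sub j) _ qj.
  have E : p = q by apply: (rb_vert HM pM qM hp); rewrite wq; apply: inp_tail.
  by rewrite in_setU inE E qj wq eqxx.
have Hinv := @inv_init [set u; w] [:: c u w] j P0 (ltnW jL) P0j P0c.
have [Mf [Hrb Hcard HX HY _]] : exists Mf, [/\ rb e c Mf, #|Mf| = #|M|,
    [disjoint [set u; w] & vx Mf], (forall g, g \in [:: c u w] -> ~~ hasc Mf g) &
    M :\: Mf \subset prom j].
  apply: (exchange (ltnW jL) (thOK (card2 u w) _ jL)) => //.
  apply: Hinv.
  - apply/disjP => x; rewrite in_set2 => /orP[] /eqP ->.
      apply: contraL uU => h; apply: vx_notU; exact: (subsetP (vx_sub (subsetDl M P0)) u h).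
    apply/negP => /vxP[p]; rewrite in_setD => /andP[pP pM] hp.
    by move: pP; rewrite Hw.
  - by move=> g; rewrite inE => /eqP ->; apply: avail_hasc av (subsetUr _ _).
  - move=> p pP; have pM := subsetP (subset_trans P0j (prom_sub j)) _ pP.
    rewrite !inE negb_or (U_head uU pM) /=.
    case: hw => [wU|[q qj wq]]; first exact: U_head wU pM.
    apply/eqP => E; have qM := subsetP (prom_sub j) _ qj.
    have E2 : p = q.
      apply: (rb_vert HM pM qM (x := w)); first by rewrite -E; apply: inp_head.
      by rewrite wq; apply: inp_tail.
    by move: (head_tail qM); rewrite -E2 E wq E2 eqxx.
have uMf : u \notin vx Mf by rewrite (disjointFr HX) // !inE eqxx.
have wMf : w \notin vx Mf by rewrite (disjointFr HX) // !inE eqxx orbT.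
have gMf : ~~ hasc Mf (c u w) by apply: HY; rewrite inE.
have := Hmax (@rb_add _ _ _ c Mf (u, w) Hrb euw uMf wMf gMf).
by rewrite cardsU1 (notin_vx (p := (u, w)) uMf) Hcard ltnn.
Qed.

Lemma noB j q x y : j < L -> q \in M -> q \notin prom j -> ((x, y) = q \/ (y, x) = q) ->
  3 <= #|opts (prom j) x| -> 0 < #|opts (prom j) y| -> False.
Proof.
move=> jL qM qn hq hx hy.
have [exy xq yq] : [/\ e x y, inp x q & inp y q].
  have eq := rb_edge HM qM.
  case: hq => E; rewrite -E /= in eq *; split => //; rewrite /inp /= ?eqxx ?orbT //.
  by rewrite esym.
have [u' u'O] := card_gt0P hy.
have [u'U eu'y av'] := optsP _ _ _ u'O.
pose bad := [set v in opts (prom j) x | v == u'] :|: [set v in opts (prom j) x | c v x \in [:: c u' y]].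
have eO : forall v, v \in opts (prom j) x -> e v x by move=> v /optsP[].
have badc : #|bad| <= 2.
  apply: leq_trans (card_U_le _ _) _.
  have h1 : #|[set v in opts (prom j) x | v == u']| <= 1.
    apply: leq_trans (_ : #|[set u']| <= 1); last by rewrite cards1.
    by apply: subset_leq_card; apply/subsetP => v; rewrite !inE => /andP[_ ->].
  have h2 := card_colx [:: c u' y] eO.
  move: h1 h2; rewrite /=; clear; lia.
have [u uO] : exists2 u, u \in opts (prom j) x & u \notin bad.
  apply/subsetPn/negP => /subset_leq_card; move: hx badc; clear; lia.
move=> hb.
have uu' : u != u' by apply: contra hb => h; rewrite in_setU in_set uO h.
have ub : c u x \notin [:: c u' y].
  by apply: contra hb => h; rewrite in_setU [u \in [set v in _ | c v x \in _]]in_set uO h orbT.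
have [uU eux av] := optsP _ _ _ uO.
have ab : c u x != c u' y by apply: contra ub => /eqP ->; rewrite inE.
pose P0 := Rq j (c u x) :|: Rq j (c u' y).
have P0j : P0 \subset prom j by rewrite subUset !Rq_sub.
have P0c : #|P0| <= 2.
  apply: leq_trans (card_U_le _ _) _.
  have := Rq_card j (c u x); have := Rq_card j (c u' y); clear; lia.
have Hinv := @inv_init [set u; u'] [:: c u x; c u' y] j P0 (ltnW jL) P0j P0c.
have [Mf [Hrb Hcard HX HY HMf]] : exists Mf, [/\ rb e c Mf, #|Mf| = #|M|,
    [disjoint [set u; u'] & vx Mf], (forall g, g \in [:: c u x; c u' y] -> ~~ hasc Mf g) &
    M :\: Mf \subset prom j].
  apply: (exchange (ltnW jL) (thOK (card2 u u') _ jL)) => //.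
  apply: Hinv.
  - apply/disjP => z; rewrite in_set2 => /orP[] /eqP ->.
      apply: contraL uU => h; apply: vx_notU; exact: (subsetP (vx_sub (subsetDl M P0)) u h).
    apply: contraL u'U => h; apply: vx_notU; exact: (subsetP (vx_sub (subsetDl M P0)) u' h).
  - move=> g; rewrite !inE => /orP[] /eqP ->.
      by apply: avail_hasc av (subsetUl _ _).
    by apply: avail_hasc av' (subsetUr _ _).
  - move=> p pP; have pM := subsetP (subset_trans P0j (prom_sub j)) _ pP.
    by rewrite in_set2 negb_or (U_head uU pM) (U_head u'U pM).
have qMf : q \in Mf.
  apply/negPn/negP => qMf; move: qn; rewrite (subsetP HMf) //.
  by rewrite in_setD qM qMf.
pose S0 := Mf :\ q.
have rb0 : rb e c S0 := rb_sub (subD1set Mf q) Hrb.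
have notS0 : forall z, inp z q -> z \notin vx S0.
  move=> z zq; apply/negP => /vxP[p]; rewrite in_setD1 => /andP[pq pMf] hp.
  by move: pq; rewrite (rb_vert Hrb pMf qMf hp zq) eqxx.
have sub0 : forall z, z \notin vx Mf -> z \notin vx S0.
  by move=> z; apply: contra; apply/subsetP/vx_sub/subD1set.
have uMf : u \notin vx Mf by rewrite (disjointFr HX) // in_set2 eqxx.
have u'Mf : u' \notin vx Mf by rewrite (disjointFr HX) // in_set2 eqxx orbT.
have aMf : ~~ hasc Mf (c u x) by apply: HY; rewrite inE eqxx.
have bMf : ~~ hasc Mf (c u' y) by apply: HY; rewrite !inE eqxx orbT.
have rb1 : rb e c ((u', y) |: S0).
  apply: (@rb_add _ _ _ c S0 (u', y) rb0 eu'y (sub0 _ u'Mf) (notS0 _ yq)).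
  by apply: contra bMf; apply: hasc_sub; exact: subD1set.
have yM : y \in vx M by apply/vxP; exists q.
have xM : x \in vx M by apply/vxP; exists q.
have rb2 : rb e c ((u, x) |: ((u', y) |: S0)).
  apply: (@rb_add _ _ _ c _ (u, x) rb1 eux).
  - rewrite vxU1 negb_or sub0 // andbT /inp /= negb_or uu' /=.
    by apply: contraL uU => /eqP ->; apply: vx_notU.
  - rewrite vxU1 negb_or notS0 // andbT /inp /= negb_or.
    apply/andP; split; first by apply: contraL u'U => /eqP <-; apply: vx_notU.
    by apply/negP => /eqP E; move: exy; rewrite E eirr.
  - by rewrite hascU1 negb_or eq_sym ab /=; apply: contra aMf; apply: hasc_sub; exact: subD1set.
have := Hmax rb2.
have n1 : (u, x) \notin (u', y) |: S0.
  apply: notin_vx; rewrite vxU1 negb_or sub0 // andbT /inp /= negb_or uu' /=.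
  by apply: contraL uU => /eqP ->; apply: vx_notU.
have n2 : (u', y) \notin S0 by apply: notin_vx; exact: sub0.
rewrite cardsU1 n1 cardsU1 n2; move: Hcard; rewrite (cardsD1 q Mf) qMf /=.
move: #|S0| #|M|; clear; lia.
Qed.

Lemma card_colu (O : {set T}) u (Y : seq K) :
  (forall z, z \in O -> e u z) -> #|[set z in O | c u z \in Y]| <= size Y.
Proof.
move=> HO; set B := [set z in O | _].
rewrite cardE -(size_map (fun z => c u z)); apply: uniq_leq_size.
  rewrite map_inj_in_uniq ?enum_uniq // => z w; rewrite !mem_enum !inE.
  move=> /andP[zO _] /andP[wO _] E; apply/eqP; apply/negPn/negP => zw.
  by have := cprop (HO z zO) (HO w wO) zw; rewrite E eqxx.
by move=> g /mapP[z]; rewrite mem_enum inE => /andP[_ h] ->.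
Qed.

Lemma card_sum (X : finType) (A : {set X}) (P : pred X) :
  #|[set z in A | P z]| = \sum_(z in A) P z.
Proof.
rewrite -sum1_card (eq_bigl (fun z => (z \in A) && P z)); last by move=> z; rewrite inE.
by rewrite big_mkcondr /=; apply: eq_bigr => z _; case: (P z).
Qed.

Lemma level_count d j : j < L -> (forall x, d <= #|[set y | e x y]|) ->
  #|U| * (d - #|M|) <= #|U| * #|prom j.+1 :\: prom j| + (th j - 1) * #|M|.
Proof.
move=> jL Hd.
set Q := M :\: prom j.
have rbQ : rb e c Q := rb_sub (subsetDl _ _) HM.
pose A2 u := [set z in vx Q | e u z && avail (prom j) (c u z)].
have H1 : forall u, u \in U -> d - #|M| <= #|A2 u|.
  move=> u uU.
  pose N := [set z | e u z].
  pose A1 := [set z in N | c u z \in [seq col q | q <- enum Q]].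
  pose A3 := [set z in N | avail (prom j) (c u z) && (z \notin vx Q)].
  have sub : N \subset A1 :|: A2 u :|: A3.
    apply/subsetP => z zN; have euz : e u z by move: zN; rewrite inE.
    case: (boolP (avail (prom j) (c u z))) => av.
      case: (boolP (z \in vx Q)) => zQ.
        by rewrite !in_setU [z \in A2 u]inE zQ euz av orbT.
      by rewrite !in_setU [z \in A3]inE zN av zQ !orbT.
    rewrite !in_setU [z \in A1]inE zN /=; apply/orP; left; apply/orP; left.
    move: av; rewrite /avail negb_or negbK => /andP[/hascP[q qM qz] nq].
    rewrite -qz; apply: map_f; rewrite mem_enum in_setD qM andbT.
    by apply: contra nq => qj; apply/hascP; exists q.
  have c1 : #|A1| <= #|Q|.
    apply: leq_trans (card_colu _ _) _; first by move=> z; rewrite inE.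
    by rewrite size_map -cardE.
  have c3 : #|A3| <= #|prom j|.
    apply: leq_trans (leq_imset_card head (prom j)).
    apply: subset_leq_card; apply/subsetP => z; rewrite inE => /andP[zN /andP[av zQ]].
    have euz : e u z by move: zN; rewrite inE.
    have zM : z \in vx M.
      apply/negPn/negP => zU; rewrite -inU in zU.
      by apply: (noA jL uU euz av); left.
    case/vxP: zM => p pM hp.
    have pj : p \in prom j.
      apply/negPn/negP => pn; move: zQ => /negP[]; apply/vxP; exists p => //.
      by rewrite in_setD pn.
    apply/imsetP; exists p => //.
    case: (inp_ht hp) => // E; exfalso.
    by apply: (noA jL uU euz av); right; exists p.
  have cQ : #|Q| + #|prom j| = #|M|.
    rewrite /Q cardsDS ?subnK //; [exact: subset_leq_card (prom_sub j)| exact: prom_sub].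
  have := Hd u; have := subset_leq_card sub.
  have := card_U_le (A1 :|: A2 u) A3; have := card_U_le A1 (A2 u).
  move: c1 c3 cQ; move: #|N| #|A1 :|: A2 u :|: A3| #|A1 :|: A2 u| #|A1| #|A2 u| #|A3| #|Q| #|prom j| #|M|.
  clear; lia.
have H2 : #|U| * (d - #|M|) <= \sum_(u in U) #|A2 u|.
  by rewrite -sum_nat_const; apply: leq_sum => u uU; exact: H1.
have H3 : \sum_(u in U) #|A2 u| = \sum_(z in vx Q) #|opts (prom j) z|.
  rewrite (eq_bigr (fun u => \sum_(z in vx Q) (e u z && avail (prom j) (c u z)))); last first.
    by move=> u _; rewrite /A2 card_sum.
  rewrite exchange_big /=; apply: eq_bigr => z _.
  by rewrite /opts card_sum.
have th5 : 5 <= th j by rewrite /th; move: jL HL; clear; lia.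
have gU : forall z, #|opts (prom j) z| <= #|U|.
  by move=> z; apply: subset_leq_card; apply/subsetP => u /optsP[].
have H5 : forall q, q \in Q ->
    #|opts (prom j) q.1| + #|opts (prom j) q.2| <= (q \in prom j.+1) * #|U| + (th j - 1).
  move=> q; rewrite in_setD => /andP[qn qM].
  have qE : (q.1, q.2) = q by case: q {qn qM}.
  have B1 : 3 <= #|opts (prom j) q.1| -> #|opts (prom j) q.2| = 0.
    move=> h; apply/eqP; rewrite -leqn0 leqNgt; apply/negP => h2.
    exact: (noB jL qM qn (or_introl qE) h h2).
  have B2 : 3 <= #|opts (prom j) q.2| -> #|opts (prom j) q.1| = 0.
    move=> h; apply/eqP; rewrite -leqn0 leqNgt; apply/negP => h2.
    exact: (noB jL qM qn (or_intror qE) h h2).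
  have g1 := gU q.1; have g2 := gU q.2.
  case: (boolP (q \in prom j.+1)) => qj1.
    have [_ /orP hv] := prom_new qn qj1.
    rewrite mul1n.
    move: B1 B2 g1 g2 th5 hv; move: #|opts (prom j) q.1| #|opts (prom j) q.2| (th j) #|U|.
    clear; move=> a b t n B1 B2 g1 g2 t5 [h|h].
      have hb : b = 0 by apply: B1; lia.
      lia.
    have ha : a = 0 by apply: B2; lia.
    lia.
  have nh : ~~ heavy j (prom j) q.
    by apply: contra qj1 => hv /=; rewrite in_setU; apply/orP; right; rewrite inE in_setD qn qM hv.
  move: nh; rewrite /heavy negb_or -!ltnNge => /andP[h1 h2].
  rewrite mul0n.
  move: B1 B2 h1 h2 th5; move: #|opts (prom j) q.1| #|opts (prom j) q.2| (th j).
  clear; move=> a b t B1 B2 h1 h2 t5.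
  case: (leqP 3 a) => [/B1 ->|ha]; first lia.
  case: (leqP 3 b) => [/B2 ->|hb]; lia.
have H6 : \sum_(q in Q) ((q \in prom j.+1) * #|U| + (th j - 1)) =
          #|prom j.+1 :\: prom j| * #|U| + #|Q| * (th j - 1).
  rewrite big_split /= sum_nat_const -big_distrl /=; congr (_ * _ + _).
  rewrite -card_sum; apply: eq_card => q; rewrite in_set /Q !in_setD -/(prom j.+1).
  case: (boolP (q \in prom j.+1)) => qj1; last by rewrite !andbF.
  by rewrite (subsetP (prom_sub j.+1) _ qj1) !andbT.
have HQ : #|Q| <= #|M| by apply: subset_leq_card; apply: subsetDl.
have H7 : \sum_(q in Q) (#|opts (prom j) q.1| + #|opts (prom j) q.2|) <=
    \sum_(q in Q) ((q \in prom j.+1) * #|U| + (th j - 1)) by apply: leq_sum.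
rewrite H6 -(@sum_vx _ _ _ _ eirr Q (fun z => #|opts (prom j) z|) rbQ) -H3 in H7.
have H8 := leq_trans H2 H7.
move: H8 HQ; move: (#|U| * (d - #|M|)) #|prom j.+1 :\: prom j| #|U| #|Q| #|M| (th j - 1).
clear; nia.
Qed.

Lemma total d : (forall x, d <= #|[set y | e x y]|) ->
  #|U| * (L * (d - #|M|)) <= #|U| * #|M| + #|M| * (3 * L * L - L).
Proof.
move=> Hd.
suff H : forall n, n <= L ->
  #|U| * (n * (d - #|M|)) <= #|U| * #|prom n| + #|M| * (4 * L * n - n * n - n).
  have := H L (leqnn L); have := subset_leq_card (prom_sub L).
  move: #|U| #|prom L| #|M| (d - #|M|) HL; clear; nia.
elim=> [|n IH] nL; first by rewrite /= cards0; nia.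
have IH' := IH (ltnW nL).
have Hl := level_count (j := n) nL Hd.
have Hc : #|prom n.+1| = #|prom n| + #|prom n.+1 :\: prom n|.
  rewrite cardsDS ?subnKC //; [exact: subset_leq_card (prom_mono (leqnSn n)) | exact: prom_mono].
rewrite Hc; move: IH' Hl nL HL; rewrite /th.
move: #|U| #|prom n| #|prom n.+1 :\: prom n| #|M| (d - #|M|); clear; nia.
Qed.

Lemma card_U : #|U| = #|T| - 2 * #|M|.
Proof. by rewrite /U cardsCs setCK (card_vx eirr HM). Qed.

End Main.

Lemma ar_big s k L : 5 <= L -> 8 * (k * k) < s * s * s -> L * L <= s -> s < L.+1 * L.+1 ->
  k * (3 * L * L - L + 2 * s) < 2 * L * (s * s).
Proof.
move=> L5 h1 h2 h3.
set A := 3 * L * L - L + 2 * s.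
have hA : A <= 5 * L * L + 3 * L by rewrite /A; nia.
have hA2 : A * A <= 32 * L * L * s.
  have : (5 * L + 3) * (5 * L + 3) <= 32 * L * L by nia.
  nia.
rewrite ltnNge; apply/negP => H.
have H2 : 4 * (L * L) * (s * s * s * s) <= k * k * (A * A) by nia.
have A0 : 0 < A by rewrite /A; nia.
have H3 : 8 * (k * k) * (A * A) < s * s * s * (A * A) by nia.
have : 32 * L * L * (s * s * s * s) < s * s * s * (A * A) by nia.
nia.
Qed.

Lemma ar_small s k L : 3 <= L <= 4 -> 8 * ((k + s) * (k + s)) < s * s * s -> L * L <= s -> s < L.+1 * L.+1 ->
  k * (3 * L * L - L + 2 * s) < 2 * L * (s * s).
Proof.
move=> /andP[L3 L4]; have [E|E] : L = 3 \/ L = 4 by lia.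
  subst L => h1 h2 h3.
  have hk : k <= 12 by nia.
  nia.
subst L => h1 h2 h3.
have hk : k <= 41 by nia.
nia.
Qed.

Lemma ar_final s k L u : 8 * ((k + s) * (k + s)) < s * s * s -> L * L <= s -> s < L.+1 * L.+1 ->
  2 * s <= u -> u * (L * s) <= u * k + k * (3 * L * L - L) -> False.
Proof.
move=> h1 h2 h3 h4 h5.
have s9 : 9 <= s.
  rewrite leqNgt; apply/negP => hs.
  have : 8 * (s * s) <= 8 * ((k + s) * (k + s)) by nia.
  nia.
have L3 : 3 <= L by nia.
have key : k * (3 * L * L - L + 2 * s) < 2 * L * (s * s).
  case: (leqP 5 L) => L5.
    apply: ar_big => //; nia.
  apply: ar_small => //; lia.
have Lsk : k <= L * s.
  rewrite leqNgt; apply/negP => hk.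
  have h6 : L * s * (L * s) < k * k by apply: ltn_mul.
  have h7 : s <= 8 * (L * L) by move: h3 L3; clear; nia.
  have h8 : s * s * s <= 8 * (L * L) * (s * s) by rewrite [s * s * s]mulnC; apply: leq_mul.
  nia.
have e1 : u * (L * s - k) <= k * (3 * L * L - L).
  rewrite mulnBr; move: h5; move: (u * (L * s)) (u * k) (k * (3 * L * L - L)); clear; lia.
have e2 : 2 * s * (L * s - k) <= u * (L * s - k) by apply: leq_mul.
have e3 : 2 * s * (L * s - k) + k * (2 * s) = 2 * L * (s * s).
  rewrite [k * _]mulnC -mulnDr subnK //; clear; nia.
rewrite mulnDr in key.
move: key e1 e2 e3; move: (k * (3 * L * L - L)) (2 * s * (L * s - k)) (u * (L * s - k)) (k * (2 * s)) (2 * L * (s * s)).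
clear; lia.
Qed.

Lemma isqrt_ex s : exists L, (L * L <= s)%N /\ (s < L.+1 * L.+1)%N.
Proof.
elim: s => [|s [L [h1 h2]]]; first by exists 0%N.
case: (ltnP s.+1 (L.+1 * L.+1)) => h3; first by exists L; split => //; lia.
exists L.+1; split => //; lia.
Qed.

Lemma rb_seq (T : finType) (e : rel T) (K : eqType) (c : T -> T -> K) (S : {set T * T}) :
  irreflexive e -> rb e c S -> rainbow_matching e c (enum S).
Proof.
move=> eirr H; split; [split|].
- by apply/allP => p; rewrite mem_enum; exact: rb_edge H.
- have : forall s : seq (T * T), uniq s -> {subset s <= S} ->
      uniq (flatten [seq [:: p.1; p.2] | p <- s]).
    elim=> [|p s IH] //= /andP[ps us] sub.
    have pS : p \in S by apply: sub; rewrite inE eqxx.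
    have nF : forall x, inp x p -> x \notin flatten [seq [:: q.1; q.2] | q <- s].
      move=> x hp; apply/negP => /flatten_mapP[q qs xq].
      have qS : q \in S by apply: sub; rewrite inE qs orbT.
      have hq : inp x q by move: xq; rewrite !inE.
      have E := rb_vert H qS pS hq hp.
      by move: ps; rewrite -E qs.
    rewrite IH //; last by move=> q qs; apply: sub; rewrite inE qs orbT.
    rewrite inE negb_or (nF _ (inp1 p)) (nF _ (inp2 p)) !andbT.
    by apply/eqP => E; move: (rb_edge H pS); rewrite E eirr.
  by apply; [exact: enum_uniq | move=> p; rewrite mem_enum].
- rewrite map_inj_in_uniq ?enum_uniq // => p q; rewrite !mem_enum => pS qS.
  exact: rb_col H pS qS.
Qed.

Lemma rb0 (T : finType) (e : rel T) (K : eqType) (c : T -> T -> K) : rb e c set0.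
Proof. by apply/andP; split; apply/forall_inP => p; rewrite in_set0. Qed.
Import Order.TTheory GRing.Theory Num.Theory.
Local Open Scope ring_scope.

Lemma real_part (R : realType) (d k : nat) :
  (k%:R : R) < d%:R - 2 * (d%:R `^ (2 / 3 : R)) ->
  (k < d)%N /\ (8 * (d * d) < (d - k) * (d - k) * (d - k))%N.
Proof.
move=> H.
set x : R := d%:R.
set a : R := x `^ (2 / 3).
have a0 : 0 <= a by apply: powR_ge0.
have x0 : 0 <= x by rewrite /x ler0n.
have a3 : a ^+ 3 = x ^+ 2.
  rewrite -powR_mulrn // /a -powRrM -powR_mulrn //; congr (x `^ _).
  by rewrite divfK // pnatr_eq0.
have kd : (k < d)%N.
  rewrite -(ltr_nat R); apply: lt_le_trans H _.
  by rewrite lerBlDr lerDl mulr_ge0.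
split => //.
have H2 : (2 * a) ^+ 3 < (x - k%:R) ^+ 3.
  rewrite ltrXn2r //; first by rewrite mulr_ge0.
  by rewrite ltrBrDr addrC -ltrBrDr.
rewrite exprMn a3 -natrB ?(ltnW kd) // in H2.
rewrite -(ltr_nat R).
have -> : ((8 * (d * d))%:R : R) = 2 ^+ 3 * d%:R ^+ 2 by rewrite -!natrX -natrM.
have -> : (((d - k) * (d - k) * (d - k))%:R : R) = (d - k)%:R ^+ 3.
  by rewrite -natrX; congr _%:R; rewrite !expnS expn0 muln1 mulnA.
exact: H2.
Qed.

Theorem mainTheorem2 (R : realType) (T : finType) (e : rel T) (K : eqType)
    (c : T -> T -> K) :
  symmetric e -> irreflexive e -> proper_edge_coloring e c ->
  (2 * mindeg e <= #|T|)%N ->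
  exists M : seq (T * T), rainbow_matching e c M /\
    (mindeg e)%:R - 2 * ((mindeg e)%:R `^ (2 / 3 : R)) <= (size M)%:R.
Proof.
move=> esym eirr [csym cprop] Hn.
case: (arg_maxnP (fun S : {set T * T} => #|S|) (rb0 e c)) => M HM Hmax.
have Hd : forall x, (mindeg e <= #|[set y | e x y]|)%N.
  move=> x; rewrite /mindeg /deg.
  have : x \in index_enum T by rewrite mem_index_enum.
  elim: (index_enum T) => //= y s IH; rewrite inE big_cons => /orP[/eqP ->|xs].
    exact: geq_minl.
  exact: leq_trans (geq_minr _ _) (IH xs).
case: (lerP ((mindeg e)%:R - 2 * ((mindeg e)%:R `^ (2 / 3 : R))) (#|M|%:R)) => Hc.
  by exists (enum M); split; [exact: rb_seq | rewrite -cardE].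
exfalso.
have [kd Hcube] := real_part Hc.
set d := mindeg e in Hd Hn kd Hcube *.
have [L [HL1 HL2]] := isqrt_ex (d - #|M|).
have s9 : (9 <= d - #|M|)%N.
  have E := subnK (ltnW kd); move: Hcube E.
  move: (d - #|M|)%N #|M| => s k H E; rewrite -E in H; clear -H; nia.
have L2 : (2 <= L)%N by move: s9 HL2; clear; nia.
have Htot := total esym eirr csym cprop HM (L := L) Hmax L2 Hd.
have HU := card_U eirr HM.
apply: (ar_final _ HL1 HL2 _ Htot).
  by rewrite subnKC ?(ltnW kd).
by rewrite HU; move: Hn kd; clear; lia.
Qed.
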